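(* Let $1\le W<d<\infty$ be integers, let $a_{ij}\in\mathbb R$ ($1\le i\le d$, $1\le j\le W$) be arbitrary constants, and let $\Phi:\mathbb R^W\to\mathbb R^d$ be given by $\Phi_i(\mathbf w)=\sin\big(\sum_{j=1}^W a_{ij}w_j\big)$, $i=1,\ldots,d$. Then, regardless of the constants $a_{ij}$, the set $F_\Phi$ of GF-learnable targets has Lebesgue measure $0$ in $\mathbb R^d$.
   Context: For a target $\mathbf f\in\mathbb R^d$, let $L_{\mathbf f}(\mathbf w)=\frac12\|\mathbf f-\Phi(\mathbf w)\|^2$ and let $\mathbf w(t)$, $t\ge0$, be the solution of the gradient flow $\frac{d\mathbf w}{dt}=-\nabla_{\mathbf w}L_{\mathbf f}(\mathbf w(t))$ with $\mathbf w(0)=\mathbf 0$. The set of GF-learnable targets is $F_\Phi=\{\mathbf f\in\mathbb R^d:\inf_{t\ge0}L_{\mathbf f}(\mathbf w(t))=0\}$. *)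

(* Defs.v *)
From HB Require Import structures.
From mathcomp Require Import all_boot all_order all_algebra.
From mathcomp Require Import all_classical all_reals all_analysis.
Set Implicit Arguments. Unset Strict Implicit. Unset Printing Implicit Defensive.
Import Order.TTheory GRing.Theory Num.Theory.
Import numFieldNormedType.Exports.
Local Open Scope classical_set_scope.
Local Open Scope ring_scope.

Definition Phi_sin {R : realType} {d W : nat} (a : 'M[R]_(d, W))
    (w : 'rV[R]_W) : 'rV[R]_d :=
  \row_(i < d) sin (\sum_(j < W) a i j * w ord0 j).

Definition sqnorm {R : realType} {d : nat} (v : 'rV[R]_d) : R :=
  \sum_(i < d) v ord0 i ^+ 2.

Definition loss {R : realType} {d W : nat} (Phi : 'rV[R]_W -> 'rV[R]_d)
    (f : 'rV[R]_d) (w : 'rV[R]_W) : R :=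
  2^-1 * sqnorm (f - Phi w).

Definition grad {R : realType} {W : nat} (L : 'rV[R]_W -> R) (w : 'rV[R]_W)
  : 'rV[R]_W :=
  \row_(k < W) ('D_(delta_mx ord0 k) L w).

Definition GF_solution {R : realType} {d W : nat}
    (Phi : 'rV[R]_W -> 'rV[R]_d) (f : 'rV[R]_d) (w : R -> 'rV[R]_W) : Prop :=
  w 0 = 0 /\
  {within [set t : R | 0 <= t], continuous w} /\
  (forall t : R, 0 < t -> is_derive t 1 w (- grad (loss Phi f) (w t))).

Definition GF_learnable {R : realType} {d W : nat}
    (Phi : 'rV[R]_W -> 'rV[R]_d) : set 'rV[R]_d :=
  [set f | exists w : R -> 'rV[R]_W, GF_solution Phi f w /\
      inf [set loss Phi f (w t) | t in [set t : R | 0 <= t]] = 0].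

(* Lebesgue null set in R^d: for every eps > 0 it is covered by countably
   many closed boxes [lo n, hi n] of total volume < eps. *)
Definition box {R : realType} {d : nat} (lo hi : 'rV[R]_d) : set 'rV[R]_d :=
  [set x | forall i : 'I_d, lo ord0 i <= x ord0 i <= hi ord0 i].

Definition box_vol {R : realType} {d : nat} (lo hi : 'rV[R]_d) : R :=
  \prod_(i < d) (hi ord0 i - lo ord0 i).

Definition lebesgue_null {R : realType} {d : nat} (A : set 'rV[R]_d) : Prop :=
  forall eps : R, 0 < eps ->
    exists lo hi : nat -> 'rV[R]_d,
      (forall n (i : 'I_d), lo n ord0 i <= hi n ord0 i) /\
      A `<=` \bigcup_n box (lo n) (hi n) /\
      (forall N, \sum_(n < N) box_vol (lo n) (hi n) <= eps).

(* Main.v *)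
Require Import Defs.
From HB Require Import structures.
From mathcomp Require Import all_boot all_order all_algebra.
From mathcomp Require Import all_classical all_reals all_analysis.
From mathcomp Require Import ring lra.
Import Order.TTheory GRing.Theory Num.Theory.
Import numFieldNormedType.Exports.
Local Open Scope classical_set_scope.
Local Open Scope ring_scope.

Lemma isd_add {R : realType} {f g : R -> R} {x df dg : R} :
  is_derive x 1 f df -> is_derive x 1 g dg ->
  is_derive x 1 (fun s => f s + g s) (df + dg).
Proof. move=> H1 H2; exact: (is_deriveD H1 H2). Qed.

Lemma isd_mul {R : realType} {f g : R -> R} {x df dg : R} :
  is_derive x 1 f df -> is_derive x 1 g dg ->
  is_derive x 1 (fun s => f s * g s) (f x * dg + g x * df).
Proof. move=> H1 H2; exact: (is_deriveM H1 H2). Qed.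

Lemma isd_sin {R : realType} {g : R -> R} {x dg : R} :
  is_derive x 1 g dg -> is_derive x 1 (fun s => sin (g s)) (cos (g x) * dg).
Proof. move=> H; exact: (@is_derive1_comp _ sin g x _ _ _ H). Qed.

Lemma isd_sum {R : realType} {n} {h : 'I_n -> R -> R} {x : R} {dh : 'I_n -> R} :
  (forall i, is_derive x 1 (h i) (dh i)) ->
  is_derive x 1 (fun s => \sum_(i < n) h i s) (\sum_(i < n) dh i).
Proof.
move=> H; have := is_derive_sum H.
suff -> : (\sum_(i < n) h i) = (fun s => \sum_(i < n) h i s) by [].
apply/funext => s; by rewrite fct_sumE.
Qed.


Lemma isd_cst {R : realType} (c x : R) : is_derive x (1:R) (fun _ : R => c) 0.
Proof. exact: is_derive_cst. Qed.

Lemma isd_scale {R : realType} (c : R) {g : R -> R} {x dg : R} :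
  is_derive x 1 g dg -> is_derive x 1 (fun s => c * g s) (c * dg).
Proof. move=> H; exact: (is_deriveZ c H). Qed.

Lemma half_double {R : realType} (x : R) : 2^-1 * (x + x) = x.
Proof. by rewrite -mulr2n -(mulr_natl x 2) mulKf // pnatr_eq0. Qed.

Lemma isd_loss {R : realType} {d W : nat} (a : 'M[R]_(d, W)) (f : 'rV[R]_d)
  (p : 'I_W -> R -> R) (dp : 'I_W -> R) (t : R) :
  (forall j, is_derive t 1 (p j) (dp j)) ->
  is_derive t 1
    (fun s => 2^-1 * \sum_(i < d) (f ord0 i - sin (\sum_(j < W) a i j * p j s)) ^+ 2)
    (\sum_(i < d) (f ord0 i - sin (\sum_(j < W) a i j * p j t)) *
        - (cos (\sum_(j < W) a i j * p j t) * \sum_(j < W) a i j * dp j)).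
Proof.
move=> Hp.
have HU i : is_derive t 1 (fun s => \sum_(j < W) a i j * p j s) (\sum_(j < W) a i j * dp j).
  by apply: isd_sum => j; apply: isd_scale.
have Hr i : is_derive t 1 (fun s => f ord0 i - sin (\sum_(j < W) a i j * p j s))
    (0 + - (cos (\sum_(j < W) a i j * p j t) * \sum_(j < W) a i j * dp j)).
  apply: (@isd_add R (fun _ => f ord0 i) (fun s => - sin (\sum_(j < W) a i j * p j s))); try exact: isd_cst.
pose r i s := f ord0 i - sin (\sum_(j < W) a i j * p j s).
pose D i := (0 - cos (\sum_(j < W) a i j * p j t) * \sum_(j < W) a i j * dp j).
have Hs : is_derive t 1 (fun s => \sum_(i < d) (f ord0 i - sin (\sum_(j < W) a i j * p j s)) ^+ 2)
   (\sum_(i < d) (r i t * D i + r i t * D i)).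
  by apply: isd_sum => i; exact: (isd_mul (Hr i) (Hr i)).
have H2 := isd_scale (2^-1) Hs.
apply: (is_derive_eq H2).
rewrite mulr_sumr; apply: eq_bigr => i _.
by rewrite half_double /D /r sub0r.
Qed.


Lemma lossE {R : realType} {d W : nat} (a : 'M[R]_(d, W)) (f : 'rV[R]_d) y :
  loss (Phi_sin a) f y =
  2^-1 * \sum_(i < d) (f ord0 i - sin (\sum_(j < W) a i j * y ord0 j)) ^+ 2.
Proof.
rewrite /loss /sqnorm; congr (_ * _); apply: eq_bigr => i _.
by rewrite !mxE.
Qed.

Lemma derive_line {R : realType} {W : nat} (F : 'rV[R]_W -> R) (x v : 'rV[R]_W) :
  'D_v F x = 'D_1 (fun h : R => F (h *: v + x)) 0.
Proof.
rewrite /derive; set g1 := fun h => h^-1 *: _; set g2 := fun h => h^-1 *: _.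
suff -> : g1 = g2 by [].
by apply/funext => h; rewrite /g1 /g2 /= addr0 scale0r add0r [_%:A]mulr1.
Qed.

Lemma grad_lossE {R : realType} {d W : nat} (a : 'M[R]_(d, W)) (f : 'rV[R]_d)
   (x : 'rV[R]_W) (k : 'I_W) :
  'D_(delta_mx ord0 k) (loss (Phi_sin a) f) x =
  \sum_(i < d) (f ord0 i - sin (\sum_(j < W) a i j * x ord0 j)) *
        - (cos (\sum_(j < W) a i j * x ord0 j) * a i k).
Proof.
rewrite derive_line.
set v := delta_mx ord0 k.
have -> : (fun h : R => loss (Phi_sin a) f (h *: v + x)) =
   (fun s => 2^-1 * \sum_(i < d) (f ord0 i - sin (\sum_(j < W) a i j * 
       (fun j s => s * v ord0 j + x ord0 j) j s)) ^+ 2).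
  apply/funext => s; rewrite lossE; congr (_ * _); apply: eq_bigr => i _.
  by congr ((_ - sin _) ^+ 2); apply: eq_bigr => j _; rewrite !mxE.
have Hp j : is_derive (0:R) 1 ((fun j s => s * v ord0 j + x ord0 j) j) (v ord0 j).
  rewrite /=; apply: is_derive_eq.
  by rewrite scaler0 add0r addr0 [_%:A]mulr1.
have := isd_loss a f (fun j s => s * v ord0 j + x ord0 j) (fun j => v ord0 j) 0 Hp.
move=> H; rewrite (derive_val (is_derive := H)).
apply: eq_bigr => i _.
have -> : \sum_(j < W) a i j * (0 * v ord0 j + x ord0 j) = \sum_(j < W) a i j * x ord0 j.
  by apply: eq_bigr => j _; rewrite mul0r add0r.
congr (_ * - (_ * _)).
rewrite (bigD1 k) //= big1 => [|j /negbTE jk]; rewrite /v !mxE ?eqxx ?jk ?andbF ?mulr0 //.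
by rewrite mulr1 addr0.
Qed.


Lemma isd_coord {R : realType} {W : nat} (w : R -> 'rV[R]_W) (t : R) (D : 'rV[R]_W) (j : 'I_W) :
  is_derive t 1 w D -> is_derive t 1 (fun s => w s ord0 j) (D ord0 j).
Proof.
move=> H.
have dw : derivable w t 1 by case: H.
have dj : derivable (fun s => w s ord0 j) t 1 by move/derivable_mxP: dw; apply.
have := derive_mx dw.
rewrite (derive_val (is_derive := H)) => ->.
rewrite mxE.
exact: derivableP.
Qed.

Lemma loss_traj_deriv {R : realType} {d W : nat} (a : 'M[R]_(d, W)) (f : 'rV[R]_d)
  (w : R -> 'rV[R]_W) (t : R) :
  is_derive t 1 w (- grad (loss (Phi_sin a) f) (w t)) ->
  exists2 D : R, is_derive t 1 (fun s => loss (Phi_sin a) f (w s)) D & D <= 0.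
Proof.
move=> H.
set G := grad (loss (Phi_sin a) f) (w t).
have Hp j : is_derive t 1 (fun s => w s ord0 j) ((- G) ord0 j) by exact: isd_coord.
have := isd_loss a f (fun j s => w s ord0 j) (fun j => (- G) ord0 j) t Hp.
have -> : (fun s => 2^-1 * \sum_(i < d) (f ord0 i - sin (\sum_(j < W) a i j * w s ord0 j)) ^+ 2)
   = (fun s => loss (Phi_sin a) f (w s)).
  by apply/funext => s; rewrite lossE.
move=> HD; eexists; first exact: HD.
set r := fun i => f ord0 i - sin (\sum_(j < W) a i j * w t ord0 j).
set c := fun i => cos (\sum_(j < W) a i j * w t ord0 j).
have GE j : G ord0 j = \sum_(i < d) r i * - (c i * a i j).
  by rewrite /G /grad mxE grad_lossE.
have -> : \sum_(i < d) r i * - (c i * \sum_(j < W) a i j * (- G) ord0 j)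
   = - \sum_(j < W) G ord0 j ^+ 2.
  have -> : \sum_(i < d) r i * - (c i * \sum_(j < W) a i j * (- G) ord0 j)
     = \sum_(i < d) \sum_(j < W) - (G ord0 j * (r i * - (c i * a i j))).
    apply: eq_bigr => i _.
    rewrite mulr_sumr -sumrN mulr_sumr; apply: eq_bigr => j _.
    rewrite mxE; ring.
  rewrite exchange_big -sumrN; apply: eq_bigr => j _.
  by rewrite sumrN -mulr_sumr -GE expr2.
rewrite oppr_le0; apply: sumr_ge0 => j _; exact: sqr_ge0.
Qed.


Lemma loss_traj_noninc {R : realType} {d W : nat} (a : 'M[R]_(d, W)) (f : 'rV[R]_d)
  (w : R -> 'rV[R]_W) :
  (forall t : R, 0 < t -> is_derive t 1 w (- grad (loss (Phi_sin a) f) (w t))) ->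
  forall s t : R, 0 < s -> s <= t ->
  loss (Phi_sin a) f (w t) <= loss (Phi_sin a) f (w s).
Proof.
move=> Hw s t s0 st.
set l := fun s => loss (Phi_sin a) f (w s).
have Hl (x : R) : 0 < x -> exists2 D : R, is_derive x 1 l D & D <= 0.
  by move=> x0; apply: loss_traj_deriv; apply: Hw.
have t0 : 0 < t by apply: (lt_le_trans s0 st).
apply: (@ler0_derive1_le_oo R l 0 (t + 1)).
- move=> x; rewrite in_itv /= => /andP[x0 _].
  by have [D [HD _] _] := Hl x x0.
- move=> x; rewrite in_itv /= => /andP[x0 _].
  have [D HD D0] := Hl x x0.
  by rewrite derive1E (derive_val (is_derive := HD)).
- move=> x; rewrite inE /= in_itv /= => /andP[x0 _].
  have [D [HD _] _] := Hl x x0.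
  apply: differentiable_continuous; exact/derivable1_diffP.
- by rewrite in_itv /=; apply/andP; split; lra.
- by rewrite in_itv /=; apply/andP; split; lra.
- exact: st.
Qed.


Lemma sin_int {R : realType} (x : R) (z : int) : sin (x + pi *+ 2 * z%:~R) = sin x.
Proof.
case: z => n.
  by rewrite -[(Posz n)%:~R]/(n%:R) mulr_natr (periodicn (@sinD2pi R)).
rewrite NegzE mulrNz mulrN.
rewrite -[((n.+1)%:Z)%:~R]/((n.+1)%:R) mulr_natr.
set y := x - _.
have -> : x = y + (pi *+ 2) *+ n.+1 by rewrite /y subrK.
by rewrite (periodicn (@sinD2pi R)).
Qed.

Lemma barrier {R : realType} (h : R -> R) (T fi : R) :
  (forall t, T <= t -> {for t, continuous h}) ->
  (forall t, T <= t -> `|fi - sin (h t)| < 1) ->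
  forall t, T <= t -> `|h t| <= `|h T| + pi *+ 2.
Proof.
move=> hc hb.
pose c : R := if 0 <= fi then - (pi / 2) else pi / 2.
have Hc y : sin y = sin c -> ~ (`|fi - sin y| < 1).
  move=> ->; rewrite /c; case: ifP => fi0.
    rewrite sinN sin_pihalf opprK ger0_norm; last by lra.
    by lra.
  rewrite sin_pihalf ler0_norm; last by move/negbT: fi0; rewrite -ltNge => ?; lra.
  by move/negbT: fi0; rewrite -ltNge => ?; lra.
pose P : R := pi *+ 2.
have P0 : 0 < P by rewrite /P mulrn_wgt0 // pi_gt0.
pose k := Num.floor ((h T - c) / P).
pose p := c + P * k%:~R.
have pT : p <= h T.
  have := floor_le ((h T - c) / P); rewrite -/k ler_pdivlMr // => H.
  by rewrite /p mulrC; lra.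
have Tp : h T < p + P.
  have := floorD1_gt ((h T - c) / P); rewrite -/k ltr_pdivrMr // intrD mulrDl mul1r => H.
  by rewrite /p mulrC; lra.
have sinp : sin p = sin c by rewrite /p sin_int.
have sinp2 : sin (p + P) = sin c.
  by rewrite /p -addrA -[X in _ + (_ + X)]mulr1 -mulrDr -[1]/((1%:Z)%:~R) -intrD sin_int.
move=> t Tt.
have cont : {within `[T, t], continuous h}.
  apply: continuous_in_subspaceT => x; rewrite inE /= in_itv /= => /andP[Tx _].
  exact: hc.
have inT s : s \in `[T, t] -> T <= s by rewrite in_itv /= => /andP[].
have H1 : p < h t.
  rewrite ltNge; apply/negP => htp.
  have [s sT hs] : exists2 s, s \in `[T, t] & h s = p.
    apply: IVT => //; apply/andP; split.
      by rewrite ge_min htp orbT.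
    by rewrite le_max pT.
  by apply: (Hc (h s)); [rewrite hs | apply: hb; apply: inT].
have H2 : h t < p + P.
  rewrite ltNge; apply/negP => htp.
  have [s sT hs] : exists2 s, s \in `[T, t] & h s = p + P.
    apply: IVT => //; apply/andP; split.
      by rewrite ge_min (ltW Tp).
    by rewrite le_max htp orbT.
  by apply: (Hc (h s)); [rewrite hs | apply: hb; apply: inT].
have n1 : h T <= `|h T| := ler_norm (h T).
have n2 : - h T <= `|h T| by rewrite -normrN ler_norm.
rewrite ler_norml; apply/andP; split; rewrite -/P; lra.
Qed.


Lemma sum_uniq_sub {R : realType} (I : eqType) (s s' : seq I) (F : I -> R) :
  uniq s -> uniq s' -> {subset s <= s'} -> (forall i, 0 <= F i) ->
  \sum_(i <- s) F i <= \sum_(i <- s') F i.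
Proof.
move=> us us' ss' F0.
rewrite [X in _ <= X](bigID (fun i => i \in s)) /=.
have -> : \sum_(i <- s' | i \in s) F i = \sum_(i <- s) F i.
  rewrite -big_filter; apply: perm_big; apply: uniq_perm.
  - exact: filter_uniq.
  - exact: us.
  - move=> i; rewrite mem_filter; case: (boolP (i \in s)) => //= /ss' ->; by [].
by rewrite lerDl; apply: sumr_ge0.
Qed.

Lemma sum_pickle {R : realType} (G : nat * nat -> R) (c : nat -> R) (eps : R) :
  (forall p, 0 <= G p) -> (forall B N, \sum_(k < N) G (B, nat_of_ord k) <= c B) ->
  (forall M, \sum_(B < M) c B <= eps) ->
  forall N, \sum_(n < N) oapp G 0 (@pickle_inv (nat * nat)%type n) <= eps.
Proof.
move=> G0 HB Hc N.
set s := pmap (@pickle_inv (nat * nat)%type) (index_iota 0 N).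
have -> : \sum_(n < N) oapp G 0 (@pickle_inv (nat * nat)%type n) = \sum_(i <- s) G i.
  by rewrite /s big_pmap big_mkord.
have us : uniq s by apply: pmap_uniq; [exact: pickle_invK | exact: iota_uniq].
pose M := (\max_(p <- s) maxn p.1 p.2).+1.
pose s' := [seq (B, k) | B <- index_iota 0 M, k <- index_iota 0 M].
have us' : uniq s'.
  apply: allpairs_uniq; [exact: iota_uniq | exact: iota_uniq |].
  by move=> [x1 y1] [x2 y2] _ _ /= [-> ->].
have ss' : {subset s <= s'}.
  move=> [B k] ps.
  have H := @leq_bigmax_seq _ s xpredT (fun p : nat * nat => maxn p.1 p.2) _ ps isT.
  apply: allpairs_f; rewrite mem_index_iota /= ltnS; apply: leq_trans H;
    by rewrite ?leq_maxl ?leq_maxr.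
have H1 := sum_uniq_sub _ _ _ _ us us' ss' G0. apply: (le_trans H1).
rewrite big_allpairs.
apply: le_trans (Hc M).
rewrite big_mkord; apply: ler_sum => B _.
by rewrite big_mkord.
Qed.


Definition hh {R : realType} (B K : nat) : R := (2 * B%:R) / K%:R.

Lemma hh_ge0 {R : realType} B K : 0 <= @hh R B K.
Proof. by rewrite /hh divr_ge0 // mulr_ge0. Qed.

Lemma cell_exists {R : realType} (B K : nat) (y : R) : (0 < K)%N -> `|y| <= B%:R ->
  exists m : 'I_K, `|y - (- B%:R + hh B K * m%:R)| <= hh B K.
Proof.
move=> K0 yB.
have Kr : 0 < (K%:R : R) by rewrite ltr0n.
have hK : hh B K * K%:R = 2 * B%:R :> R by rewrite /hh mulfVK // gt_eqF.
have [B0|Bpos] := eqVneq B 0%N.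
  exists (Ordinal K0); rewrite B0 /hh /= !(mulr0, mul0r) oppr0 add0r subr0.
  by move: yB; rewrite B0.
have Br : 0 < (B%:R : R) by rewrite ltr0n lt0n.
have h0 : 0 < hh B K :> R by rewrite /hh divr_gt0 // mulr_gt0.
have yB' : - B%:R <= y <= B%:R by rewrite -ler_norml.
move: yB' => /andP[yl yr].
set h := hh B K in hK h0 *.
pose z := (y + B%:R) / h.
have z0 : 0 <= z by rewrite /z divr_ge0 //; [lra | exact: ltW].
have hz : h * z = y + B%:R by rewrite /z mulrC divfK // gt_eqF.
have [nz1 nz2] : ((Num.truncn z)%:R <= z) /\ (z < (Num.truncn z).+1%:R).
  by have /andP[] := truncn_itv z0.
have [nK|Kn] := ltnP (Num.truncn z) K.
  exists (Ordinal nK) => /=.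
  have e1 : h * (Num.truncn z)%:R <= h * z by rewrite ler_pM2l.
  have e2 : h * z < h * (Num.truncn z).+1%:R by rewrite ltr_pM2l.
  rewrite -natr1 mulrDr mulr1 in e2.
  rewrite ger0_norm; lra.
have K1 : (K.-1 < K)%N by rewrite prednK.
exists (Ordinal K1) => /=.
have Kz : K%:R <= z by rewrite -Num.Theory.truncn_ge_nat.
have e1 : h * K%:R <= h * z by rewrite ler_pM2l.
have eK : (K.-1)%:R = K%:R - 1 :> R by rewrite -[in RHS](prednK K0) -addn1 natrD addrK.
rewrite eK mulrBr mulr1 mulrC.
rewrite ger0_norm; lra.
Qed.


Lemma sin_lip {R : realType} (x y : R) : `|sin x - sin y| <= `|x - y|.
Proof.
wlog xy : x y / x <= y.
  move=> H; have [xy|yx] := leP x y; first exact: H.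
  by rewrite distrC [`|x - y|]distrC; apply: H; apply: ltW.
have cs : {within `[x, y], continuous (@sin R)}.
  by apply: continuous_subspaceT; exact: continuous_sin.
have [c _ E] := @MVT_segment R sin cos x y xy (fun c _ => is_derive_sin c) cs.
rewrite distrC E normrM [`|x - y|]distrC.
by rewrite ler_piMl // cos_max.
Qed.

Definition Cst {R : realType} {d W : nat} (a : 'M[R]_(d, W)) : R :=
  1 + \sum_(i < d) \sum_(j < W) `|a i j|.

Lemma Cst_ge0 {R : realType} {d W : nat} (a : 'M[R]_(d, W)) : 0 <= Cst a.
Proof. rewrite /Cst; apply: addr_ge0 => //; apply: sumr_ge0 => i _; apply: sumr_ge0 => j _; exact: normr_ge0. Qed.

Lemma U_lip {R : realType} {d W : nat} (a : 'M[R]_(d, W)) (x z : 'rV[R]_W) (h : R) :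
  0 <= h -> (forall j, `|x ord0 j - z ord0 j| <= h) -> forall i,
  `|\sum_(j < W) a i j * x ord0 j - \sum_(j < W) a i j * z ord0 j| <= Cst a * h.
Proof.
move=> h0 Hxz i.
rewrite -sumrB.
apply: le_trans (ler_norm_sum _ _ _) _.
apply: le_trans (_ : \sum_(j < W) `|a i j| * h <= _).
  apply: ler_sum => j _; rewrite -mulrBr normrM; apply: ler_wpM2l => //.
rewrite -mulr_suml; apply: ler_wpM2r => //.
rewrite /Cst; apply: le_trans (_ : \sum_(i0 < d) \sum_(j < W) `|a i0 j| <= _); last first.
  by rewrite lerDr.
rewrite [X in _ <= X](bigD1 i) //= lerDl; apply: sumr_ge0 => i0 _; apply: sumr_ge0 => j _.
exact: normr_ge0.
Qed.


Definition NB {R : realType} {d W : nat} (a : 'M[R]_(d, W)) (B : nat) : set 'rV[R]_d :=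
  [set f | forall eta : R, 0 < eta -> exists x : 'rV[R]_W,
     (forall j, `|x ord0 j| <= B%:R) /\
     (forall i, `|sin (\sum_(j < W) a i j * x ord0 j) - f ord0 i| < eta)].

Definition corner {R : realType} {W : nat} (B K : nat) (m : {ffun 'I_W -> 'I_K}) : 'rV[R]_W :=
  \row_j (- B%:R + hh B K * (m j)%:R).

Definition crad {R : realType} {d W : nat} (a : 'M[R]_(d, W)) (B K : nat) : R :=
  Cst a * hh B K + K%:R^-1.

Definition ctr {R : realType} {d W : nat} (a : 'M[R]_(d, W)) (B K : nat)
  (m : {ffun 'I_W -> 'I_K}) (i : 'I_d) : R :=
  sin (\sum_(j < W) a i j * corner B K m ord0 j).

Definition lo_c {R : realType} {d W : nat} (a : 'M[R]_(d, W)) (B K : nat)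
  (m : {ffun 'I_W -> 'I_K}) : 'rV[R]_d := \row_i (ctr a B K m i - crad a B K).

Definition hi_c {R : realType} {d W : nat} (a : 'M[R]_(d, W)) (B K : nat)
  (m : {ffun 'I_W -> 'I_K}) : 'rV[R]_d := \row_i (ctr a B K m i + crad a B K).

Lemma rad_ge0 {R : realType} {d W : nat} (a : 'M[R]_(d, W)) B K : 0 <= crad a B K.
Proof.
rewrite /crad; apply: addr_ge0; last by rewrite invr_ge0.
by apply: mulr_ge0; [exact: Cst_ge0 | exact: hh_ge0].
Qed.

Lemma in_cell {R : realType} {d W : nat} (a : 'M[R]_(d, W)) (B K : nat) (f : 'rV[R]_d) :
  (0 < K)%N -> NB a B f -> exists m, box (lo_c a B K m) (hi_c a B K m) f.
Proof.
move=> K0 Hf.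
have Kr : 0 < (K%:R : R) by rewrite ltr0n.
have [x [xB xf]] : exists x : 'rV[R]_W, (forall j, `|x ord0 j| <= B%:R) /\ (forall i, `|sin (\sum_(j < W) a i j * x ord0 j) - f ord0 i| < K%:R^-1).
  by apply: Hf; rewrite invr_gt0.
have : forall j, exists mj : 'I_K, `|x ord0 j - (- B%:R + hh B K * mj%:R)| <= hh B K.
  by move=> j; apply: cell_exists.
move=> /fin_all_exists [g Hg].
exists [ffun j => g j] => i.
rewrite !mxE.
have H1 : `|sin (\sum_(j < W) a i j * x ord0 j) - ctr a B K [ffun j => g j] i| <= Cst a * hh B K.
  apply: le_trans (sin_lip _ _) _.
  apply: U_lip; first exact: hh_ge0.
  by move=> j; rewrite mxE ffunE.
have H2 := xf i.
move: H1 H2; rewrite /crad.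
set c := ctr _ _ _ _ i; set s := sin _; set r := Cst a * hh B K.
rewrite !ler_norml ltr_norml => /andP[h1 h2] /andP[h3 h4].
by apply/andP; split; lra.
Qed.


Lemma box_vol_const {R : realType} {d : nat} (lo hi : 'rV[R]_d) (c : R) :
  (forall i, hi ord0 i - lo ord0 i = c) -> box_vol lo hi = c ^+ d.
Proof.
move=> H; rewrite /box_vol (eq_bigr (fun _ => c)) => [|i _]; last exact: H.
by rewrite prodr_const card_ord.
Qed.

Lemma sum_ifle {R : realType} (N n : nat) (v : R) : 0 <= v ->
  \sum_(k < N) (if (k < n)%N then v else 0) <= n%:R * v.
Proof.
move=> v0.
have E : forall N, \sum_(k < N) (if (k < n)%N then v else 0) = (minn N n)%:R * v.
  elim=> [|M IH]; first by rewrite big_ord0 min0n mul0r.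
  rewrite big_ord_recr /= IH.
  case: (ltnP M n) => Mn.
    by rewrite (minn_idPl Mn) -natr1 mulrDl mul1r.
  by rewrite addr0 (minn_idPr (leq_trans Mn (leqnSn _))).
rewrite E; apply: ler_wpM2r => //; rewrite ler_nat; exact: geq_minr.
Qed.

Lemma geom_sum {R : realType} (eps : R) M : 0 <= eps ->
  \sum_(B < M) eps / 2 ^+ B.+1 <= eps.
Proof.
move=> e0.
have E : forall M, \sum_(B < M) eps / 2 ^+ B.+1 = eps - eps / 2 ^+ M.
  elim=> [|n IH]; first by rewrite big_ord0 expr0 divr1 subrr.
  rewrite big_ord_recr /= IH exprS.
  field.
  by rewrite expf_neq0.
rewrite E gerBl; apply: divr_ge0 => //; exact: exprn_ge0.
Qed.


Definition KB {R : realType} {d W : nat} (a : 'M[R]_(d, W)) (eps : R) (B : nat) : nat :=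
  (Num.truncn ((2 * (2 * B%:R * Cst a + 1)) ^+ d * 2 ^+ B.+1 / eps)).+1.

Definition cb {R : realType} {d W : nat} (a : 'M[R]_(d, W)) (eps : R) (B k : nat) :
  'rV[R]_d * 'rV[R]_d :=
  match (insub k : option 'I_#|{ffun 'I_W -> 'I_(KB a eps B)}|) with
  | Some i => (lo_c a B (KB a eps B) (enum_val i), hi_c a B (KB a eps B) (enum_val i))
  | None => (0, 0)
  end.

Definition bx {R : realType} {d W : nat} (a : 'M[R]_(d, W)) (eps : R) (n : nat) :
  'rV[R]_d * 'rV[R]_d :=
  match @pickle_inv (nat * nat)%type n with
  | Some p => cb a eps p.1 p.2
  | None => (0, 0)
  end.

Lemma cb_le {R : realType} {d W : nat} (a : 'M[R]_(d, W)) eps B k i :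
  (cb a eps B k).1 ord0 i <= (cb a eps B k).2 ord0 i.
Proof.
rewrite /cb; case: insubP => [j _ _|_] /=; last by rewrite mxE.
rewrite !mxE; have := rad_ge0 a B (KB a eps B); lra.
Qed.

Lemma cb_vol {R : realType} {d W : nat} (a : 'M[R]_(d, W)) eps B k : (0 < d)%N ->
  box_vol (cb a eps B k).1 (cb a eps B k).2 =
  if (k < #|{ffun 'I_W -> 'I_(KB a eps B)}|)%N then (crad a B (KB a eps B) *+ 2) ^+ d else 0.
Proof.
move=> d0; rewrite /cb; case: insubP => [j -> _|/negbTE ->] /=.
  by apply: box_vol_const => i; rewrite !mxE; lra.
rewrite (box_vol_const _ _ 0) ?expr0n ?gtn_eqF //.
by move=> i; rewrite !mxE subrr.
Qed.


Lemma key_bound {R : realType} {d W : nat} (a : 'M[R]_(d, W)) (eps : R) (B : nat) :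
  (W < d)%N -> 0 < eps ->
  #|{ffun 'I_W -> 'I_(KB a eps B)}|%:R * (crad a B (KB a eps B) *+ 2) ^+ d
    <= eps / 2 ^+ B.+1.
Proof.
move=> Wd e0.
set K := KB a eps B.
have K0 : (0 < K)%N by [].
have Kr : 0 < (K%:R : R) by rewrite ltr0n.
set q : R := 2 * (2 * B%:R * Cst a + 1).
have q0 : 0 <= q by rewrite /q mulr_ge0 // addr_ge0 // mulr_ge0 // ?Cst_ge0 // mulr_ge0.
have Eq : crad a B K *+ 2 = q / K%:R.
  rewrite /crad /hh /q; field; by rewrite gt_eqF.
rewrite Eq expr_div_n card_ffun !card_ord natrX.
have KK : (K%:R : R) ^+ W * K%:R <= K%:R ^+ d.
  rewrite -exprSr -!natrX ler_nat; apply: leq_pexp2l => //.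
have KW : (K%:R : R) ^+ W / K%:R ^+ d <= K%:R^-1.
  rewrite ler_pdivrMr ?exprn_gt0 //.
  rewrite -[X in X <= _](mulKf (lt0r_neq0 Kr)) ler_wpM2l ?invr_ge0 ?(ltW Kr) //.
  by rewrite mulrC.
have Qd : 0 <= q ^+ d by apply: exprn_ge0.
have tr := Num.Theory.truncnS_gt (q ^+ d * 2 ^+ B.+1 / eps).
rewrite -/K in tr.
have p2 : 0 < (2 : R) ^+ B.+1 by apply: exprn_gt0.
apply: (@le_trans _ _ (q ^+ d / K%:R)).
  rewrite mulrCA; apply: ler_wpM2l => //.
have H : q ^+ d * 2 ^+ B.+1 <= eps * K%:R.
  move: tr; rewrite ltr_pdivrMr // => /ltW H0; rewrite [eps * _]mulrC; exact H0.
by rewrite ler_pdivrMr // mulrAC ler_pdivlMr.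
Qed.


Lemma NB_null {R : realType} {d W : nat} (a : 'M[R]_(d, W)) :
  (W < d)%N -> lebesgue_null (\bigcup_B NB a B).
Proof.
move=> Wd eps e0.
have d0 : (0 < d)%N by apply: leq_ltn_trans Wd.
exists (fun n => (bx a eps n).1), (fun n => (bx a eps n).2).
split; [|split].
- move=> n i; rewrite /bx; case: pickle_inv => [p|] /=; first exact: cb_le.
  by rewrite mxE.
- move=> f [B _ Hf].
  have K0 : (0 < KB a eps B)%N by [].
  have [m Hm] := in_cell a B (KB a eps B) f K0 Hf.
  exists (pickle (B, val (enum_rank m))) => //.
  by rewrite /bx pickleK_inv /= /cb valK enum_rankK.
- move=> N.
  pose G := fun p : nat * nat => box_vol (cb a eps p.1 p.2).1 (cb a eps p.1 p.2).2.
  have -> : \sum_(n < N) box_vol (bx a eps n).1 (bx a eps n).2 =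
      \sum_(n < N) oapp G 0 (@pickle_inv (nat * nat)%type n).
    apply: eq_bigr => n _; rewrite /bx; case: pickle_inv => [p|] //=.
    by rewrite (box_vol_const _ _ 0) ?expr0n ?gtn_eqF // => i; rewrite !mxE subrr.
  pose c := fun B => #|{ffun 'I_W -> 'I_(KB a eps B)}|%:R *
       (crad a B (KB a eps B) *+ 2) ^+ d.
  have H1 : forall p, 0 <= G p.
    move=> p; rewrite /G cb_vol //; case: ifP => // _; apply: exprn_ge0.
    by rewrite mulrn_wge0 // rad_ge0.
  have H2 : forall B M, \sum_(k < M) G (B, nat_of_ord k) <= c B.
    move=> B M; rewrite /G /=.
    under eq_bigr do rewrite cb_vol //.
    apply: sum_ifle; apply: exprn_ge0; by rewrite mulrn_wge0 // rad_ge0.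
  have H3 : forall M, \sum_(B < M) c B <= eps.
    move=> M; apply: le_trans (geom_sum eps M (ltW e0)); apply: ler_sum => B _.
    exact: key_bound.
  exact: (sum_pickle G c eps H1 H2 H3 N).
Qed.


Lemma loss_ge0 {R : realType} {d W : nat} (a : 'M[R]_(d, W)) (f : 'rV[R]_d) y :
  0 <= loss (Phi_sin a) f y.
Proof.
rewrite lossE; apply: mulr_ge0; first by rewrite invr_ge0.
by apply: sumr_ge0 => i _; exact: sqr_ge0.
Qed.

Lemma res_small {R : realType} {d W : nat} (a : 'M[R]_(d, W)) (f : 'rV[R]_d) y (del : R) :
  0 < del -> loss (Phi_sin a) f y < del ^+ 2 / 2 ->
  forall i, `|sin (\sum_(j < W) a i j * y ord0 j) - f ord0 i| < del.
Proof.
move=> d0 hl i.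
set r := f ord0 i - sin (\sum_(j < W) a i j * y ord0 j).
have hr : r ^+ 2 <= 2 * loss (Phi_sin a) f y.
  rewrite lossE mulrA mulfV ?pnatr_eq0 // mul1r.
  rewrite (bigD1 i) //= lerDl; apply: sumr_ge0 => k _; exact: sqr_ge0.
have hr2 : r ^+ 2 < del ^+ 2 by lra.
rewrite distrC -/r ltr_norml; apply/andP; split; nra.
Qed.

Lemma pinv_param {R : realType} {d W : nat} (a : 'M[R]_(d, W)) (y : 'rV[R]_W) (Mu : R) :
  0 <= Mu -> (forall i, `|\sum_(j < W) a i j * y ord0 j| <= Mu) ->
  exists x : 'rV[R]_W,
    (forall j, `|x ord0 j| <= Mu * \sum_(i < d) \sum_(j < W) `|pinvmx a^T i j|) /\
    (forall i, \sum_(j < W) a i j * x ord0 j = \sum_(j < W) a i j * y ord0 j).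
Proof.
move=> Mu0 HM.
set u := y *m a^T.
have uE i : u ord0 i = \sum_(j < W) a i j * y ord0 j.
  by rewrite /u mxE; apply: eq_bigr => j _; rewrite mxE mulrC.
exists (u *m pinvmx a^T); split.
  move=> j; rewrite mxE.
  apply: le_trans (ler_norm_sum _ _ _) _.
  apply: le_trans (_ : \sum_(i < d) Mu * `|pinvmx a^T i j| <= _).
    apply: ler_sum => i _; rewrite normrM; apply: ler_wpM2r => //.
    by rewrite uE.
  rewrite -mulr_sumr; apply: ler_wpM2l => //.
  rewrite exchange_big /= [X in _ <= X](bigD1 j) //= lerDl.
  by apply: sumr_ge0 => k _; apply: sumr_ge0 => i _.
move=> i.
have Hx : (u *m pinvmx a^T) *m a^T = u by apply: mulmxKpV; apply: submxMl.
rewrite -uE -{2}Hx mxE; apply: eq_bigr => j _.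
by rewrite [a^T j i]mxE mulrC.
Qed.


Lemma learnable_sub {R : realType} {d W : nat} (a : 'M[R]_(d, W)) :
  GF_learnable (Phi_sin a) `<=` \bigcup_B NB a B.
Proof.
move=> f [w [[w0 [wc wd]] hinf]].
pose L t := loss (Phi_sin a) f (w t).
pose E := [set L t | t in [set t : R | 0 <= t]].
have hE : has_inf E.
  split; first by exists (L 0), 0 => /=.
  by exists 0 => _ [t _ <-]; exact: loss_ge0.
have approx e : 0 < e -> exists t, 0 <= t /\ L t < e.
  move=> e0; have [v [t t0 <-] Hv] := inf_adherent e0 hE.
  by exists t; split => //; move: Hv; rewrite /E hinf add0r.
have mono s t : 0 < s -> s <= t -> L t <= L s.
  by move=> s0 st; exact: (loss_traj_noninc a f w wd).
have L0 : forall t, 0 <= L t by move=> t; exact: loss_ge0.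
have [l0|l0] := eqVneq (L 0) 0.
  exists 0%N => // eta eta0; exists (w 0); split.
    by move=> j; rewrite w0 mxE normr0.
  apply: res_small => //; rewrite -/(L 0) l0.
  by apply: divr_gt0 => //; apply: exprn_gt0.
have l0p : 0 < L 0 by rewrite lt_def l0 L0.
have [T [T0 LT]] : exists T, 0 < T /\ L T < 1 / 2.
  have m0 : 0 < Num.min (L 0) (1 / 2) by rewrite lt_min l0p /=; lra.
  have [t [t0 Lt]] := approx _ m0.
  exists t; split; last by move: Lt; rewrite lt_min => /andP[].
  rewrite lt_def t0 andbT; apply/eqP => t00; move: Lt; rewrite t00 lt_min ltxx.
  by [].
have bnd t : T <= t -> forall i,
    `|f ord0 i - sin (\sum_(j < W) a i j * w t ord0 j)| < 1.
  move=> Tt i; rewrite distrC; apply: res_small => //.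
  rewrite expr1n; apply: le_lt_trans (mono T t T0 Tt) _.
  exact: LT.
have hcont i t : T <= t -> {for t, continuous (fun s => \sum_(j < W) a i j * w s ord0 j)}.
  move=> Tt; have t0 : 0 < t by apply: lt_le_trans Tt.
  have Hd := wd t t0.
  have Hh := isd_sum (fun j => isd_scale (a i j) (isd_coord w t _ j Hd)).
  apply: differentiable_continuous; apply/derivable1_diffP; by case: Hh.
have hb i t : T <= t -> `|\sum_(j < W) a i j * w t ord0 j| <=
    `|\sum_(j < W) a i j * w T ord0 j| + pi *+ 2.
  move=> Tt; apply: (barrier (fun s => \sum_(j < W) a i j * w s ord0 j) T (f ord0 i)) => //.
  - by move=> s Ts; apply: hcont.
  - by move=> s Ts; apply: bnd.
pose Mu := \sum_(i < d) (`|\sum_(j < W) a i j * w T ord0 j| + pi *+ 2).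
have pi0 : 0 <= (pi : R) *+ 2 by rewrite mulrn_wge0 // ltW // pi_gt0.
have Mu0 : 0 <= Mu by apply: sumr_ge0 => i _; apply: addr_ge0.
have MuB i t : T <= t -> `|\sum_(j < W) a i j * w t ord0 j| <= Mu.
  move=> Tt; apply: le_trans (hb i t Tt) _.
  rewrite /Mu (bigD1 i) //= lerDl; apply: sumr_ge0 => k _; apply: addr_ge0 => //.
pose SP := \sum_(i < d) \sum_(j < W) `|pinvmx a^T i j|.
exists (Num.truncn (Mu * SP)).+1 => // eta eta0.
have fin t : T <= t -> L t < eta ^+ 2 / 2 -> exists x : 'rV[R]_W,
     (forall j, `|x ord0 j| <= (Num.truncn (Mu * SP)).+1%:R) /\
     (forall i, `|sin (\sum_(j < W) a i j * x ord0 j) - f ord0 i| < eta).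
  move=> Tt Lt.
  have [x [xb xe]] := pinv_param a (w t) Mu Mu0 (fun i => MuB i t Tt).
  exists x; split.
    move=> j; apply: le_trans (xb j) _; apply: ltW; exact: Num.Theory.truncnS_gt.
  move=> i; rewrite xe; exact: res_small.
have e2 : 0 < eta ^+ 2 / 2 by apply: divr_gt0 => //; apply: exprn_gt0.
have m0 : 0 < Num.min (eta ^+ 2 / 2) (L 0) by rewrite lt_min e2 l0p.
have [t [t0 Lt]] := approx _ m0.
move: Lt; rewrite lt_min => /andP[Lt1 Lt2].
have tp : 0 < t.
  rewrite lt_def t0 andbT; apply/eqP => t00; move: Lt2; rewrite t00 ltxx.
  by [].
have [tT|Tt] := leP t T.
  apply: (fin T) => //; apply: le_lt_trans (mono t T tp tT) Lt1.
by apply: (fin t) => //; apply: ltW.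
Qed.


Lemma null_sub {R : realType} {d : nat} (A B : set 'rV[R]_d) :
  A `<=` B -> lebesgue_null B -> lebesgue_null A.
Proof.
move=> AB HB eps e0; have [lo [hi [H1 [H2 H3]]]] := HB eps e0.
by exists lo, hi; split => //; split => //; apply: subset_trans H2.
Qed.

Theorem corollary2 (R : realType) (W d : nat) (hW : (1 <= W)%N) (hWd : (W < d)%N)
    (a : 'M[R]_(d, W)) :
  lebesgue_null (GF_learnable (Phi_sin a)).
Proof.
apply: (null_sub _ _ (learnable_sub a)).
exact: NB_null.
Qed.
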